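(* Let $R$ be a ring with a separated filtration $u:R\to\mathbb{Z}\cup\{\infty\}$ with respect to which $R$ is complete, and let $(\sigma,\delta)$ be a skew derivation on $R$ compatible with $u$. (i) The left $R$-module $R^b[[x;\sigma,\delta]]=\{\sum_{n\ge0}r_nx^n: r_n\in R,\ u(r_n)+\tfrac12n\to\infty\text{ as }n\to\infty\}$ is a ring, with multiplication given by extending the rule $xa=\sigma(a)x+\delta(a)$ ($a\in R$) to a continuous $R$-linear multiplication in a unique way. (ii) Define $f_u:R^b[[x;\sigma,\delta]]\to\tfrac12\mathbb{Z}\cup\{\infty\}$ by $f_u(\sum_{i\ge0}r_ix^i)=\inf_{i\ge0}\{u(r_i)+\tfrac12 i\}$, and identify $R$ with the subring of constant series. Then $f_u$ is a ring filtration with $f_u|_R=u$, $R^b[[x;\sigma,\delta]]$ is complete with respect to $f_u$, and the identity on $\mathrm{gr}_u(R)$ extends to an isomorphism of graded rings $\mathrm{gr}_{f_u}(R^b[[x;\sigma,\delta]])\to(\mathrm{gr}_u(R))[Z]$ mapping (the principal symbol of) $x$ to $Z$.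
   Context: A filtration satisfies $u(0)=\infty$, $u(x+y)\ge\min\{u(x),u(y)\}$, $u(xy)\ge u(x)+u(y)$; separated means $u(x)=\infty\iff x=0$; $\mathrm{gr}_u(R)=\bigoplus_\lambda F_\lambda R/F_{\lambda^+}R$ with $F_\lambda R=\{u\ge\lambda\}$, $F_{\lambda^+}R=\{u>\lambda\}$. A skew derivation is $(\sigma,\delta)$ with $\sigma$ an automorphism and $\delta$ additive with $\delta(ab)=\delta(a)b+\sigma(a)\delta(b)$; it is compatible with $u$ if $\deg_u(\sigma-\mathrm{id})>0$ and $\deg_u(\delta)>0$, where $\deg_u(d)=\inf_{x\ne0}\{u(d(x))-u(x)\}$. *)

(* Defs.v *)
From HB Require Import structures.
From mathcomp Require Import all_boot all_order all_algebra.
From mathcomp Require Import boolp classical_sets constructive_ereal ereal.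
Set Implicit Arguments. Unset Strict Implicit. Unset Printing Implicit Defensive.
Import Order.TTheory GRing.Theory Num.Theory.
Local Open Scope ring_scope.
Local Open Scope classical_set_scope.
Local Open Scope ereal_scope.

(* Values Z ∪ {∞} and ½Z ∪ {∞} are represented inside \bar rat,
   with ∞ = +oo.  *)

Definition int_valued {T : Type} (v : T -> \bar rat) : Prop :=
  forall x, v x = +oo \/ exists z : int, v x = (z%:~R : rat)%:E.

Definition halfint_valued {T : Type} (P : T -> Prop) (v : T -> \bar rat) : Prop :=
  forall x, P x -> v x = +oo \/ exists z : int, v x = ((z%:~R : rat) / 2%:R)%:E.

Definition is_filtration_on {T : Type} (P : T -> Prop) (zero : T)
  (add mul : T -> T -> T) (v : T -> \bar rat) : Prop :=
  v zero = +oo /\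
  (forall x y, P x -> P y -> Order.min (v x) (v y) <= v (add x y)) /\
  (forall x y, P x -> P y -> v x + v y <= v (mul x y)).

Definition filtration (R : pzRingType) (u : R -> \bar rat) : Prop :=
  is_filtration_on (fun _ => True) 0%R +%R *%R u.

Definition separated_filt (R : pzRingType) (u : R -> \bar rat) : Prop :=
  forall x, u x = +oo <-> x = 0%R.

Definition cauchy_seq {T : Type} (sub : T -> T -> T) (v : T -> \bar rat)
  (s : nat -> T) : Prop :=
  forall N : rat, exists m, forall i j, (m <= i)%N -> (m <= j)%N ->
    N%:E <= v (sub (s i) (s j)).

Definition converges_to {T : Type} (sub : T -> T -> T) (v : T -> \bar rat)
  (s : nat -> T) (a : T) : Prop :=
  forall N : rat, exists m, forall i, (m <= i)%N -> N%:E <= v (sub (s i) a).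

Definition complete_on {T : Type} (P : T -> Prop) (sub : T -> T -> T)
  (v : T -> \bar rat) : Prop :=
  forall s : nat -> T, (forall n, P (s n)) -> cauchy_seq sub v s ->
    exists a, P a /\ converges_to sub v s a.

Definition deg_u (R : pzRingType) (u : R -> \bar rat) (d : R -> R) : \bar rat :=
  ereal_inf [set u (d x) - u x | x in [set x : R | x != 0%R]].

Definition ring_automorphism (R : pzRingType) (s : R -> R) : Prop :=
  (forall a b, s (a + b)%R = (s a + s b)%R) /\
  (forall a b, s (a * b)%R = (s a * s b)%R) /\ s 1%R = 1%R /\ bijective s.

Definition skew_derivation (R : pzRingType) (s d : R -> R) : Prop :=
  ring_automorphism s /\
  (forall a b, d (a + b)%R = (d a + d b)%R) /\
  (forall a b, d (a * b)%R = (d a * b + s a * d b)%R).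

Definition compatible (R : pzRingType) (u : R -> \bar rat) (s d : R -> R) : Prop :=
  0 < deg_u u (fun a => s a - a)%R /\ 0 < deg_u u d.

Section Series.
Variable R : pzRingType.
Definition ser := nat -> R.
Definition sadd (f g : ser) : ser := fun n => (f n + g n)%R.
Definition sopp (f : ser) : ser := fun n => (- f n)%R.
Definition ssub (f g : ser) : ser := fun n => (f n - g n)%R.
Definition szero : ser := fun _ => 0%R.
Definition sscal (a : R) (f : ser) : ser := fun n => (a * f n)%R.
Definition smono (i : nat) (a : R) : ser := fun n => if n == i then a else 0%R.
Definition sconst (a : R) : ser := smono 0 a.
Definition sone : ser := sconst 1%R.
Definition sX : ser := smono 1 1%R.
Definition strunc (n : nat) (r : nat -> R) : ser :=
  fun k => if (k < n)%N then r k else 0%R.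

Definition in_Rb (u : R -> \bar rat) (f : ser) : Prop :=
  forall N : rat, exists n0, forall n, (n0 <= n)%N ->
    N%:E <= u (f n) + ((n%:R : rat) / 2%:R)%:E.

Definition f_u (u : R -> \bar rat) (f : ser) : \bar rat :=
  ereal_inf [set u (f i) + ((i%:R : rat) / 2%:R)%:E | i in [set: nat]].

Definition skew_mult (u : R -> \bar rat) (s d : R -> R)
  (mul : ser -> ser -> ser) : Prop :=
  (forall f g, in_Rb u f -> in_Rb u g -> in_Rb u (mul f g)) /\
  (forall f g h, in_Rb u f -> in_Rb u g -> in_Rb u h ->
     mul (mul f g) h = mul f (mul g h)) /\
  (forall f g h, in_Rb u f -> in_Rb u g -> in_Rb u h ->
     mul f (sadd g h) = sadd (mul f g) (mul f h)) /\
  (forall f g h, in_Rb u f -> in_Rb u g -> in_Rb u h ->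
     mul (sadd f g) h = sadd (mul f h) (mul g h)) /\
  (* R-linearity / R is the subring of constants acting by scalars *)
  (forall a f, in_Rb u f -> mul (sconst a) f = sscal a f) /\
  (forall a, mul sX (sconst a) = sadd (smono 1 (s a)) (sconst (d a))) /\
  (forall n, mul sX (smono n 1%R) = smono n.+1 1%R) /\
  (forall f g, in_Rb u f -> in_Rb u g -> forall N : rat, exists M : rat,
     forall f' g', in_Rb u f' -> in_Rb u g' ->
       M%:E <= f_u u (ssub f' f) -> M%:E <= f_u u (ssub g' g) ->
       N%:E <= f_u u (ssub (mul f' g') (mul f g))).
End Series.

(* The canonical graded map
     Phi : gr_u(R)[Z] --> gr_{f_u}(R^b[[x;σ,δ]]),
     (class of r_i in gr_u(R)_{λ-i/2}) Z^i  |-->  class of  sum_i r_i x^i  in degree λ,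
   which restricts to the identity-induced map on gr_u(R) (i = 0) and sends
   the symbol of 1 times Z to the principal symbol of x, is written out
   explicitly on representatives (Z has degree 1/2).  [gr_iso u mul] says:
   Phi is well defined, bijective in every degree λ ∈ ½Z, and multiplicative
   on homogeneous monomials; i.e. Phi is an isomorphism of graded rings, whose
   inverse is the isomorphism gr_{f_u}(R^b) -> gr_u(R)[Z] of the statement.
   (For λ - i/2 not an integer, gr_u(R)_{λ-i/2} = 0 and the conditions below
   are automatically consistent with that.) *)
Section GrIso.
Variable R : pzRingType.
Definition gr_iso (u : R -> \bar rat) (mul : ser R -> ser R -> ser R) : Prop :=
  forall m : int, let lam : rat := (m%:~R / 2%:R)%R in
  (* homogeneous elements of degree lam map into F_lam *)
  (forall n (r : nat -> R),
     (forall i, (i < n)%N -> (lam - (i%:R / 2%:R))%R%:E <= u (r i)) ->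
     lam%:E <= f_u u (strunc n r)) /\
  (* well defined and injective in degree lam *)
  (forall n (r : nat -> R),
     (forall i, (i < n)%N -> (lam - (i%:R / 2%:R))%R%:E <= u (r i)) ->
     (lam%:E < f_u u (strunc n r) <->
      forall i, (i < n)%N -> (lam - (i%:R / 2%:R))%R%:E < u (r i))) /\
  (* surjective in degree lam *)
  (forall f, in_Rb u f -> lam%:E <= f_u u f ->
     exists n (r : nat -> R),
       (forall i, (i < n)%N -> (lam - (i%:R / 2%:R))%R%:E <= u (r i)) /\
       lam%:E < f_u u (ssub f (strunc n r))).
Definition gr_mult (u : R -> \bar rat) (mul : ser R -> ser R -> ser R) : Prop :=
  (* Phi(a Z^i) Phi(b Z^j) = Phi(ab Z^(i+j)) for a in F_mu, b in F_nu *)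
  forall (mu nu : int) (a b : R) (i j : nat),
    (mu%:~R : rat)%:E <= u a -> (nu%:~R : rat)%:E <= u b ->
    ((mu + nu)%:~R + ((i + j)%:R / 2%:R))%R%:E <
      f_u u (ssub (mul (smono i a) (smono j b)) (smono (i + j) (a * b)%R)).
End GrIso.

(* Main.v *)
Require Import Defs.
From HB Require Import structures.
From mathcomp Require Import all_boot all_order all_algebra.
From mathcomp Require Import boolp classical_sets constructive_ereal ereal.
From mathcomp Require Import ring lra zify.
Import Order.TTheory GRing.Theory Num.Theory.
Local Open Scope ring_scope.
Local Open Scope ereal_scope.
Set Implicit Arguments. Unset Strict Implicit.
Lemma conv_le (N c : rat) (y : \bar rat) :
  (N%:E <= y + c%:E) = ((N - c)%:E <= y).
Proof.
case: y => [r||] //=.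
  by rewrite -EFinD !lee_fin; apply/idP/idP => h; lra.
by rewrite !leey.
Qed.

Lemma int_gt (z w : int) : ((z%:~R : rat) < w%:~R)%R -> ((z%:~R : rat) + 1 <= w%:~R)%R.
Proof.
rewrite ltr_int => h.
have h2 : (z + 1 <= w)%R by lia.
by rewrite -[1%R]/((1%:~R : rat)) -rmorphD ler_int.
Qed.

Lemma notle1 (r : rat) : ~ (r + 1 <= r)%R.
Proof. move=> h; lra. Qed.

Local Open Scope classical_set_scope.

Lemma sup_eq (A : set (\bar rat)) x0 a : A x0 ->
  ubound A a -> (forall v, ubound A v -> a <= v) -> ereal_sup A = a.
Proof.
move=> Ax0 ha hl; rewrite /ereal_sup /supremum.
case: ifPn => [/eqP A0|_]; first by rewrite A0 in Ax0.
apply: xget_subset1; last exact: is_subset1_supremums.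
by split => // v hv; apply: hl.
Qed.

Lemma inf_min (S : set (\bar rat)) m : S m -> (forall y, S y -> m <= y) ->
  ereal_inf S = m.
Proof.
move=> Sm hm; rewrite /ereal_inf (@sup_eq _ (- m) (- m)) ?oppeK //.
- by exists m.
- by move=> y [x Sx <-]; rewrite leeN2; apply: hm.
- by move=> v hv; apply: hv; exists m.
Qed.

Lemma inf_half (S : set (\bar rat)) :
  (forall x, S x -> x = +oo \/ exists z : int, x = ((z%:~R : rat) / 2%:R)%:E) ->
  forall x, S x -> ereal_inf S <= x.
Proof.
move=> hS x Sx; case: (hS x Sx) => [->|[z hz]]; first by rewrite leey.
pose P n := S (((z - n%:Z)%:~R : rat) / 2%:R)%:E.
have P0 : P 0%N by rewrite /P subr0 -hz.
case: (pselect (exists N0, forall n, P n -> (n <= N0)%N)) => [[N0 hN0]|hnb].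
  pose Pb n := `[< P n >].
  have ex : exists n, Pb n by exists 0%N; apply/asboolP.
  have hN0' : forall n, Pb n -> (n <= N0)%N by move=> n /asboolP; apply: hN0.
  have [nm /asboolP Pnm hnm'] := ex_maxnP ex hN0'.
  have hnm : forall n, P n -> (n <= nm)%N by move=> n /asboolP; apply: hnm'.
  rewrite (@inf_min _ _ Pnm); first by rewrite hz lee_fin ler_pM2r // ler_int; lia.
  move=> y Sy; case: (hS y Sy) => [->|[w hw]]; first by rewrite leey.
  rewrite hw lee_fin ler_pM2r // ler_int.
  have [hwz|hwz] := lerP w z; last first.
    have : (0 <= nm%:Z)%R by []. lia.
  have hP : P `|z - w|%N.
    rewrite /P; have -> : (z - `|z - w|%N%:Z = w)%R.
      by rewrite gez0_abs ?subr_ge0 // opprB addrC subrK.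
    by rewrite -hw.
  have := hnm _ hP; lia.
have -> : ereal_inf S = -oo.
  rewrite /ereal_inf (@sup_eq _ (- x) +oo) //; first by exists x.
    by move=> y _; rewrite leey.
  case=> [r||] hv //.
    exfalso; apply: hnb; exists (Num.truncn (2%:R * r + z%:~R)) => n Pn.
    have hm : [set - x | x in S] (- ((((z - n%:Z)%:~R : rat) / 2%:R)%:E)).
      by exists ((((z - n%:Z)%:~R : rat) / 2%:R)%:E).
    have := hv _ hm.
    rewrite -EFinN lee_fin => hle.
    have hle' : ((n%:R : rat) <= 2%:R * r + z%:~R)%R.
      move: hle; rewrite rmorphB /= -[((n%:Z)%:~R : rat)]/(n%:R) => hle; lra.
    rewrite truncn_ge_nat //; apply: le_trans hle'; exact: ler0n.
  have hm : [set - x | x in S] (- x) by exists x.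
  by have := hv _ hm; rewrite hz.
by rewrite leNye.
Qed.

Local Close Scope classical_set_scope.

Lemma inf_ge (S : set (\bar rat)) m : (forall x, S x -> m <= x) -> m <= ereal_inf S.
Proof. move=> h; exact: le_ereal_inf_tmp. Qed.

Section Main.
Variable R : pzRingType.
Variable u : R -> \bar rat.
Hypothesis u_int : int_valued u.
Hypothesis u_filt : filtration u.
Hypothesis u_sep : separated_filt u.
Hypothesis u_comp : complete_on (fun _ => True) (fun a b => (a - b)%R) u.

Definition big (N : rat) (x : R) := N%:E <= u x.

Lemma big_le M N x : (M <= N)%R -> big N x -> big M x.
Proof. by move=> h; apply: le_trans; rewrite lee_fin. Qed.

Lemma u0 : u 0%R = +oo.
Proof. by case: u_filt. Qed.

Lemma big0 N : big N 0%R.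
Proof. by rewrite /big u0 leey. Qed.

Lemma bigD N x y : big N x -> big N y -> big N (x + y)%R.
Proof.
move=> hx hy; case: u_filt => _ [h _].
apply: le_trans (h x y I I); by rewrite le_min; apply/andP.
Qed.

Lemma bigM M N x y : big M x -> big N y -> big (M + N) (x * y)%R.
Proof.
move=> hx hy; case: u_filt => _ [_ h].
apply: le_trans (h x y I I); rewrite EFinD; exact: leeD.
Qed.

Lemma big_inf x : (forall N, big N x) -> x = 0%R.
Proof.
move=> h; apply/u_sep; move: (h 0%R); rewrite /big.
case E: (u x) => [r||] //= _.
have := h (r + 1)%R; by rewrite /big E lee_fin => /notle1.
Qed.

Lemma lipL a : exists K, forall N y, big N y -> big (N + K) (a * y)%R.
Proof.
case: (u_int a) => [ha|[z hz]].
  have -> : a = 0%R by apply/u_sep.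
  by exists 0%R => N y _; rewrite mul0r; apply: big0.
exists (z%:~R)%R => N y hy; rewrite addrC; apply: bigM => //.
by rewrite /big hz.
Qed.

Lemma lipR a : exists K, forall N y, big N y -> big (N + K) (y * a)%R.
Proof.
case: (u_int a) => [ha|[z hz]].
  have -> : a = 0%R by apply/u_sep.
  by exists 0%R => N y _; rewrite mulr0; apply: big0.
exists (z%:~R)%R => N y hy; apply: bigM => //.
by rewrite /big hz.
Qed.

Lemma lipN : exists K, forall N y, big N y -> big (N + K) (- y)%R.
Proof.
have [K hK] := lipL (-1)%R.
by exists K => N y hy; rewrite -mulN1r; apply: hK.
Qed.

Lemma bigN_gen : exists K, forall T y, big (T - K) y -> big T (- y)%R.
Proof.
have [K hK] := lipN; exists K => T y hy.
by have := hK _ _ hy; rewrite subrK.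
Qed.

Lemma close_eq x y :
  (forall T, exists z, big T (x - z)%R /\ big T (y - z)%R) -> x = y.
Proof.
move=> h; have [K hK] := bigN_gen.
apply/eqP; rewrite -subr_eq0; apply/eqP; apply: big_inf => T.
have [z [h1 h2]] := h (Num.max T (T - K))%R.
have -> : (x - y = (x - z) + - (y - z))%R by rewrite opprB addrA subrK.
apply: bigD; first by apply: big_le h1; rewrite le_max lexx.
by apply: hK; apply: big_le h2; rewrite le_max lexx orbT.
Qed.

Lemma close_eq2 x y :
  (forall T, exists z, big T (z - x)%R /\ big T (z - y)%R) -> x = y.
Proof.
move=> h; have [K hK] := bigN_gen.
apply: close_eq => T.
have [z [h1 h2]] := h (T - K)%R.
by exists z; split; rewrite -opprB; apply: hK.
Qed.

Section Additive.
Variable f : R -> R.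
Hypothesis fD : forall a b, f (a + b)%R = (f a + f b)%R.
Lemma add_f0 : f 0%R = 0%R.
Proof. by apply: (@addrI _ (f 0%R)); rewrite -fD !addr0. Qed.
Lemma add_fN a : f (- a)%R = (- f a)%R.
Proof. by apply/eqP; rewrite -addr_eq0 -fD addNr add_f0. Qed.
Lemma add_fB a b : f (a - b)%R = (f a - f b)%R.
Proof. by rewrite fD add_fN. Qed.
Lemma add_fsum (a : nat -> R) m n :
  f (\sum_(m <= i < n) a i)%R = (\sum_(m <= i < n) f (a i))%R.
Proof.
elim/big_rec2: _; first exact: add_f0.
by move=> i y1 y2 _ <-; rewrite fD.
Qed.
End Additive.


Variables sigma delta : R -> R.
Hypothesis sd : skew_derivation sigma delta.
Hypothesis cmp : compatible u sigma delta.

Lemma sigD a b : sigma (a + b)%R = (sigma a + sigma b)%R.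
Proof. by case: sd => [[h _] _]. Qed.
Lemma sigM a b : sigma (a * b)%R = (sigma a * sigma b)%R.
Proof. by case: sd => [[_ [h _]] _]. Qed.
Lemma sig1 : sigma 1%R = 1%R.
Proof. by case: sd => [[_ [_ [h _]]] _]. Qed.
Lemma delD a b : delta (a + b)%R = (delta a + delta b)%R.
Proof. by case: sd => [_ [h _]]. Qed.
Lemma delM a b : delta (a * b)%R = (delta a * b + sigma a * delta b)%R.
Proof. by case: sd => [_ [_ h]]. Qed.
Lemma sig0 : sigma 0%R = 0%R. Proof. exact: add_f0 sigD. Qed.
Lemma del0 : delta 0%R = 0%R. Proof. exact: add_f0 delD. Qed.
Lemma del1 : delta 1%R = 0%R.
Proof.
have := delM 1 1; rewrite mul1r mulr1 sig1 mul1r => h.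
by apply: (@addrI _ (delta 1%R)); rewrite addr0 -{1}h.
Qed.

Lemma deg_big (d : R -> R) : d 0%R = 0%R -> 0 < deg_u u d ->
  forall N y, big N y -> big (N + 1) (d y).
Proof.
move=> d0 hd N y hy.
have [->|yn0] := eqVneq y 0%R; first by rewrite d0; apply: big0.
have hl : deg_u u d <= u (d y) - u y.
  rewrite /deg_u; apply: inf_half; last by exists y.
  move=> _ [x /= xn0 <-].
  case: (u_int x) => [ux|[w hw]].
    by move: xn0; rewrite (proj1 (u_sep x) ux) eqxx.
  case: (u_int (d x)) => [->|[v hv]]; first by left; rewrite hw.
  right; exists (2 * (v - w))%R; rewrite hv hw -EFinB; congr (_%:E).
  by rewrite rmorphM rmorphB /=; field.
case: (u_int y) => [uy|[z hz]].
  by move: yn0; rewrite (proj1 (u_sep y) uy) eqxx.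
case: (u_int (d y)) => [hdy|[w1 hw1]]; first by rewrite /big hdy leey.
move: hy hl; rewrite /big hz hw1 -EFinB lee_fin => hy hl.
have := lt_le_trans hd hl; rewrite lte_fin subr_gt0 => /int_gt hzw.
by rewrite lee_fin; apply: le_trans hzw; rewrite lerD2r.
Qed.

Lemma big_del N y : big N y -> big (N + 1) (delta y).
Proof. exact: (deg_big del0 (proj2 cmp)). Qed.

Lemma big_sig1 N y : big N y -> big (N + 1) (sigma y - y)%R.
Proof.
apply: (@deg_big (fun a => sigma a - a)%R _ (proj1 cmp)).
by rewrite sig0 subr0.
Qed.

Lemma big_sig N y : big N y -> big N (sigma y).
Proof.
move=> hy; have -> : sigma y = (y + (sigma y - y))%R by rewrite addrC subrK.
apply: bigD => //; apply: (big_le _ (big_sig1 hy)); lra.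
Qed.

Definition tends0 (a : nat -> R) :=
  forall N, exists m, forall i, (m <= i)%N -> big N (a i).
Definition psum (a : nat -> R) n := (\sum_(0 <= i < n) a i)%R.
Definition conv (s : nat -> R) l :=
  forall N, exists m, forall i, (m <= i)%N -> big N (s i - l)%R.

Lemma sum_big N (a : nat -> R) m n :
  (forall i, (m <= i < n)%N -> big N (a i)) -> big N (\sum_(m <= i < n) a i)%R.
Proof.
move=> h; rewrite big_nat_cond; apply: (big_ind (big N)) => //.
- exact: big0.
- exact: bigD.
by move=> i /andP[hi _]; apply: h.
Qed.

Lemma psum_diff (a : nat -> R) j i : (j <= i)%N ->
  (psum a i - psum a j)%R = (\sum_(j <= k < i) a k)%R.
Proof.
by move=> hji; rewrite /psum (@big_cat_nat _ _ _ j 0 i) //= addrAC subrr add0r.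
Qed.

Lemma conv_psum a : tends0 a -> exists l, conv (psum a) l.
Proof.
move=> ha; have [K hK] := bigN_gen.
have := u_comp (s := psum a) (fun _ => I).
case=> [N|l [_ hl]]; last by exists l.
have [m hm] := ha (Num.max N (N - K))%R.
exists m => i j hi hj.
have [hji|hij] := leqP j i.
  rewrite psum_diff //; apply: sum_big => k /andP[hk _].
  by apply: big_le (hm k (leq_trans hj hk)); rewrite le_max lexx.
rewrite -opprB; apply: hK; rewrite psum_diff ?(ltnW hij) //.
apply: sum_big => k /andP[hk _].
by apply: big_le (hm k (leq_trans hi hk)); rewrite le_max lexx orbT.
Qed.

Definition rsum (a : nat -> R) : R :=
  match pselect (exists l, conv (psum a) l) with
  | left e => projT1 (cid e)
  | right _ => 0%R
  end.

Lemma rsumP a : tends0 a -> conv (psum a) (rsum a).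
Proof.
move=> ha; rewrite /rsum; case: pselect => [e|n].
  exact: projT2 (cid e).
by exfalso; apply: n; apply: conv_psum.
Qed.

Lemma conv_uniq s l1 l2 : conv s l1 -> conv s l2 -> l1 = l2.
Proof.
move=> h1 h2; apply: close_eq2 => T.
have [m1 hm1] := h1 T; have [m2 hm2] := h2 T.
exists (s (maxn m1 m2)); split.
  by apply: hm1; rewrite leq_maxl.
by apply: hm2; rewrite leq_maxr.
Qed.

Lemma conv_closed s l B m0 : conv s l ->
  (forall i, (m0 <= i)%N -> big B (s i)) -> big B l.
Proof.
move=> hc hs; have [K hK] := bigN_gen.
have [m hm] := hc (Num.max B (B - K))%R.
have -> : l = (s (maxn m m0) + - (s (maxn m m0) - l))%R.
  by rewrite opprB addrC subrK.
apply: bigD; first by apply: hs; rewrite leq_maxr.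
apply: hK; apply: big_le (hm _ (leq_maxl _ _)); rewrite le_max lexx orbT //.
Qed.

Lemma rsum_big a B : tends0 a -> (forall i, big B (a i)) -> big B (rsum a).
Proof.
move=> ha hb; apply: (conv_closed (m0 := 0%N) (rsumP ha)) => i _.
by apply: sum_big => k _; apply: hb.
Qed.

Lemma rsum_tail a B n : tends0 a -> (forall i, (n <= i)%N -> big B (a i)) ->
  big B (rsum a - psum a n)%R.
Proof.
move=> ha hb.
have hc : conv (fun j => psum a j - psum a n)%R (rsum a - psum a n)%R.
  move=> N; have [m hm] := rsumP ha N; exists m => i hi.
  by rewrite opprB addrA subrK; apply: hm.
apply: (conv_closed (m0 := n) hc) => i hi.
rewrite psum_diff //; apply: sum_big => k /andP[hk _]; exact: hb.
Qed.

Lemma tends0D a b : tends0 a -> tends0 b -> tends0 (fun i => a i + b i)%R.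
Proof.
move=> ha hb N; have [m1 h1] := ha N; have [m2 h2] := hb N.
exists (maxn m1 m2) => i hi; apply: bigD.
  by apply: h1; apply: leq_trans hi; rewrite leq_maxl.
by apply: h2; apply: leq_trans hi; rewrite leq_maxr.
Qed.

Lemma rsumD a b : tends0 a -> tends0 b ->
  rsum (fun i => a i + b i)%R = (rsum a + rsum b)%R.
Proof.
move=> ha hb; apply: (conv_uniq (rsumP (tends0D ha hb))).
move=> N; have [m1 h1] := rsumP ha N; have [m2 h2] := rsumP hb N.
exists (maxn m1 m2) => i hi.
rewrite /psum big_split /= opprD addrACA; apply: bigD.
  by apply: h1; apply: leq_trans hi; rewrite leq_maxl.
by apply: h2; apply: leq_trans hi; rewrite leq_maxr.
Qed.

Section Lin.
Variable f : R -> R.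
Hypothesis fD : forall a b, f (a + b)%R = (f a + f b)%R.
Hypothesis fL : exists K, forall N y, big N y -> big (N + K) (f y).

Lemma tends0_lin a : tends0 a -> tends0 (fun i => f (a i)).
Proof.
move=> ha N; have [K hK] := fL; have [m hm] := ha (N - K)%R.
by exists m => i hi; have := hK _ _ (hm i hi); rewrite subrK.
Qed.

Lemma rsum_lin a : tends0 a -> f (rsum a) = rsum (fun i => f (a i)).
Proof.
move=> ha; apply: (conv_uniq _ (rsumP (tends0_lin ha))).
move=> N; have [K hK] := fL; have [m hm] := rsumP ha (N - K)%R.
exists m => i hi; rewrite /psum -(add_fsum fD) -(add_fB fD).
by have := hK _ _ (hm i hi); rewrite subrK.
Qed.
End Lin.

Lemma rsum_fin a n : (forall i, (n <= i)%N -> a i = 0%R) -> rsum a = psum a n.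
Proof.
move=> ha.
have ht : tends0 a by move=> N; exists n => i hi; rewrite ha //; apply: big0.
apply: (conv_uniq (rsumP ht)) => N; exists n => i hi.
rewrite psum_diff // big_nat_cond big1 ?big0 // => k /andP[/andP[hk _] _].
exact: ha.
Qed.

Lemma tends0_shift a : tends0 a -> tends0 (fun i => a i.+1).
Proof. by move=> ha N; have [m hm] := ha N; exists m => i hi; apply: hm; apply: leqW. Qed.

Lemma rsum_shift a : a 0%N = 0%R -> tends0 a -> rsum a = rsum (fun i => a i.+1).
Proof.
move=> a0 ha; apply: (conv_uniq (rsumP ha)) => N.
have [m hm] := rsumP (tends0_shift ha) N.
exists m.+1 => i hi.
have -> : psum a i = psum (fun i => a i.+1) i.-1.
  case: i hi => // i _.
  by rewrite /psum big_nat_recl // a0 add0r.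
by apply: hm; case: i hi.
Qed.

Lemma rsum0 : rsum (fun _ => 0%R) = 0%R.
Proof. by rewrite (@rsum_fin _ 0) // /psum big_geq. Qed.

Definition hf (k : nat) : rat := ((k%:R : rat) / 2%:R)%R.
Lemma hfS k : hf k.+1 = (hf k + 1 / 2%:R)%R.
Proof. by rewrite /hf -addn1 natrD mulrDl. Qed.
Lemma hfD m n : hf (m + n) = (hf m + hf n)%R.
Proof. by rewrite /hf natrD mulrDl. Qed.
Lemma hf0 : hf 0 = 0%R.
Proof. by rewrite /hf mul0r. Qed.
Lemma hf_ge0 k : (0 <= hf k)%R.
Proof. by rewrite /hf divr_ge0 // ler0n. Qed.
Lemma hf_le m n : (m <= n)%N -> (hf m <= hf n)%R.
Proof. by move=> h; rewrite /hf ler_pM2r // ler_nat. Qed.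

Definition ge (A : rat) (g : ser R) := forall k, big (A - hf k) (g k).
Definition Rb (g : ser R) :=
  forall N, exists n0, forall n, (n0 <= n)%N -> big (N - hf n) (g n).

Lemma Rb_iff g : in_Rb u g <-> Rb g.
Proof.
by split => h N; have [n0 hn] := h N; exists n0 => n hn0; have := hn n hn0;
  rewrite /big ?conv_le //= -conv_le.
Qed.

Lemma ge_fu A g : ge A g -> A%:E <= f_u u g.
Proof.
move=> h; apply: inf_ge => _ [i _ <-].
by rewrite conv_le; apply: h.
Qed.

Lemma fu_le g i : f_u u g <= u (g i) + (hf i)%:E.
Proof.
apply: inf_half; last by exists i.
move=> _ [k _ <-]; case: (u_int (g k)) => [->|[z ->]]; first by left.
right; exists (2 * z + k%:Z)%R; rewrite -EFinD; congr (_%:E).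
by rewrite /hf rmorphD rmorphM /=; field.
Qed.

Lemma fu_ge A g : A%:E <= f_u u g -> ge A g.
Proof. by move=> h k; rewrite /big -conv_le; apply: le_trans h (fu_le g k). Qed.

Lemma ge_le A B g : (B <= A)%R -> ge A g -> ge B g.
Proof. by move=> hab h k; apply: (big_le _ (h k)); rewrite lerD2r. Qed.

Lemma geD A f g : ge A f -> ge A g -> ge A (sadd f g).
Proof. by move=> hf hg k; apply: bigD. Qed.

Lemma ge0 A : ge A (szero R).
Proof. by move=> k; apply: big0. Qed.

Lemma ge_inf g : (forall A, ge A g) -> g = szero R.
Proof.
move=> h; apply: funext => k; apply: big_inf => N.
by have := h (N + hf k)%R k; rewrite addrK.
Qed.

Definition Xo (g : ser R) : ser R :=
  fun m => ((if m is m'.+1 then sigma (g m') else 0) + delta (g m))%R.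

Lemma tail_X B n0 g : (forall k, (n0 <= k)%N -> big (B - hf k) (g k)) ->
  forall k, (n0.+1 <= k)%N -> big (B + 1 / 2%:R - hf k) (Xo g k).
Proof.
move=> h [//|k] hk; rewrite /Xo; apply: bigD.
  by apply: (big_le _ (big_sig (h k hk))); rewrite hfS; lra.
apply: (big_le _ (big_del (h k.+1 (ltnW hk)))); rewrite hfS; lra.
Qed.

Lemma ge_X A g : ge A g -> ge (A + 1 / 2%:R) (Xo g).
Proof.
move=> h [|k].
  rewrite /Xo add0r; apply: (big_le _ (big_del (h 0%N))); rewrite hf0; lra.
by apply: (tail_X (n0 := 0%N)) => // i _; apply: h.
Qed.

Lemma ge_Xi A g i : ge A g -> ge (A + hf i) (iter i Xo g).
Proof.
elim: i => [|i IH] h /=; first by rewrite hf0 addr0.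
by have := ge_X (IH h); rewrite hfS addrA.
Qed.

Lemma tail_Xi B n0 g i : (forall k, (n0 <= k)%N -> big (B - hf k) (g k)) ->
  forall k, (n0 + i <= k)%N -> big (B + hf i - hf k) (iter i Xo g k).
Proof.
elim: i => [|i IH] h /=; first by move=> k; rewrite addn0 hf0 addr0; apply: h.
move=> k hk; have := tail_X (IH h) (k := k); rewrite hfS addrA; apply.
by rewrite addnS in hk.
Qed.

Lemma Rb_ge g : Rb g -> exists A, ge A g.
Proof.
move=> h; have [n0 hn0] := h 0%R.
suff [A hA] : exists A, forall k, (k < n0)%N -> big (A - hf k) (g k).
  exists (Num.min A 0)%R => k; have [hk|hk] := ltnP k n0.
    by apply: (big_le _ (hA k hk)); rewrite lerD2r ge_min lexx.
  by apply: (big_le _ (hn0 k hk)); rewrite lerD2r ge_min lexx orbT.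
elim: n0 {hn0} => [|n [A hA]]; first by exists 0%R.
case: (u_int (g n)) => [hg|[z hz]].
  exists A => k; rewrite ltnS leq_eqVlt => /orP[/eqP ->|]; last exact: hA.
  by rewrite /big hg leey.
exists (Num.min A (z%:~R + hf n))%R => k; rewrite ltnS leq_eqVlt => /orP[/eqP ->|hk].
  by rewrite /big hz lee_fin lerBlDr ge_min lexx orbT.
by apply: (big_le _ (hA k hk)); rewrite lerD2r ge_min lexx.
Qed.

Lemma Rb_X g : Rb g -> Rb (Xo g).
Proof.
move=> h N; have [n0 hn0] := h (N - 1 / 2%:R)%R.
exists n0.+1 => n hn; have := tail_X hn0 hn; rewrite subrK; apply.
Qed.

Lemma Rb_Xi g i : Rb g -> Rb (iter i Xo g).
Proof. by elim: i => [|i IH] //= h; apply: Rb_X; apply: IH. Qed.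

Lemma Rb_add f g : Rb f -> Rb g -> Rb (sadd f g).
Proof.
move=> hf hg N; have [n1 h1] := hf N; have [n2 h2] := hg N.
exists (maxn n1 n2) => n hn; apply: bigD.
  by apply: h1; apply: leq_trans hn; rewrite leq_maxl.
by apply: h2; apply: leq_trans hn; rewrite leq_maxr.
Qed.

Lemma Rb_lin (f : R -> R) : (exists K, forall N y, big N y -> big (N + K) (f y)) ->
  forall g, Rb g -> Rb (fun n => f (g n)).
Proof.
move=> [K hK] g hg N; have [n0 hn0] := hg (N - K)%R.
exists n0 => n hn; have := hK _ _ (hn0 n hn).
by rewrite addrAC subrK.
Qed.

Lemma Rb_opp g : Rb g -> Rb (sopp g).
Proof. by apply: Rb_lin; apply: lipN. Qed.

Lemma Rb_scal a g : Rb g -> Rb (sscal a g).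
Proof. by apply: Rb_lin; apply: lipL. Qed.

Lemma Rb_sub f g : Rb f -> Rb g -> Rb (ssub f g).
Proof. by move=> hf hg; apply: (Rb_add hf (Rb_opp hg)). Qed.

Lemma Rb_sig g : Rb g -> Rb (fun n => sigma (g n)).
Proof. by apply: Rb_lin; exists 0%R => N y /big_sig; rewrite addr0. Qed.

Lemma Rb_del g : Rb g -> Rb (fun n => delta (g n)).
Proof.
apply: Rb_lin; exists 0%R => N y /big_del h; apply: (big_le _ h); lra.
Qed.

Lemma Rb_fin g n0 : (forall n, (n0 <= n)%N -> g n = 0%R) -> Rb g.
Proof. by move=> h N; exists n0 => n hn; rewrite h //; apply: big0. Qed.

Lemma Rb_zero : Rb (szero R).
Proof. by apply: (@Rb_fin _ 0). Qed.

Lemma Rb_smono i a : Rb (smono i a).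
Proof. by apply: (@Rb_fin _ i.+1) => n hn; rewrite /smono ifN // neq_ltn hn orbT. Qed.

Lemma Rb_strunc n r : Rb (strunc n r).
Proof. by apply: (@Rb_fin _ n) => k hk; rewrite /strunc ltnNge hk. Qed.

Lemma Rb_shsig g : Rb g -> Rb (fun n => if n is n'.+1 then sigma (g n') else 0%R).
Proof.
move=> h N; have [n0 hn0] := Rb_sig h (N - 1 / 2%:R)%R.
exists n0.+1 => [[//|n]] hn.
by apply: (big_le _ (hn0 n hn)); rewrite hfS; lra.
Qed.

Definition null (F : nat -> ser R) :=
  forall N, exists m, forall i, (m <= i)%N -> ge N (F i).
Definition SUM (F : nat -> ser R) : ser R := fun k => rsum (fun i => F i k).
Definition psumS (F : nat -> ser R) n : ser R := fun k => psum (fun i => F i k) n.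

Lemma null_t0 F k : null F -> tends0 (fun i => F i k).
Proof.
move=> h N; have [m hm] := h (N + hf k)%R; exists m => i hi.
by have := hm i hi k; rewrite addrK.
Qed.

Lemma SUM_ge A F : null F -> (forall i, ge A (F i)) -> ge A (SUM F).
Proof. by move=> hn h k; apply: rsum_big; [exact: null_t0 | move=> i; apply: h]. Qed.

Lemma SUM_tail F : null F ->
  forall N, exists m, forall n, (m <= n)%N -> ge N (ssub (SUM F) (psumS F n)).
Proof.
move=> hn N; have [m hm] := hn N; exists m => n hnm k.
apply: rsum_tail; first exact: null_t0.
by move=> i hi; apply: hm; apply: leq_trans hi.
Qed.

Lemma null_add F G : null F -> null G -> null (fun i => sadd (F i) (G i)).
Proof.
move=> hF hG N; have [m1 h1] := hF N; have [m2 h2] := hG N.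
exists (maxn m1 m2) => i hi; apply: geD.
  by apply: h1; apply: leq_trans hi; rewrite leq_maxl.
by apply: h2; apply: leq_trans hi; rewrite leq_maxr.
Qed.

Lemma SUM_add F G : null F -> null G ->
  SUM (fun i => sadd (F i) (G i)) = sadd (SUM F) (SUM G).
Proof.
move=> hF hG; apply: funext => k; rewrite /SUM /sadd.
by rewrite rsumD //; apply: null_t0.
Qed.

Lemma null_lin (f : R -> R) : (exists K, forall N y, big N y -> big (N + K) (f y)) ->
  forall F, null F -> null (fun i k => f (F i k)).
Proof.
move=> [K hK] F hF N; have [m hm] := hF (N - K)%R; exists m => i hi k.
by have := hK _ _ (hm i hi k); rewrite addrAC subrK.
Qed.

Lemma null_scal a F : null F -> null (fun i => sscal a (F i)).
Proof. exact: (null_lin (lipL a)). Qed.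

Lemma SUM_scal a F : null F -> sscal a (SUM F) = SUM (fun i => sscal a (F i)).
Proof.
move=> hF; apply: funext => k; rewrite /SUM /sscal.
apply: (rsum_lin (f := fun y => a * y)%R); first by move=> x y; rewrite mulrDr.
  exact: lipL.
exact: null_t0.
Qed.

Lemma lip_sig : exists K, forall N y, big N y -> big (N + K) (sigma y).
Proof. by exists 0%R => N y /big_sig; rewrite addr0. Qed.
Lemma lip_del : exists K, forall N y, big N y -> big (N + K) (delta y).
Proof. by exists 0%R => N y /big_del h; apply: (big_le _ h); lra. Qed.

Lemma null_X F : null F -> null (fun i => Xo (F i)).
Proof.
move=> hF N; have [m hm] := hF N; exists m => i hi.
by apply: (ge_le _ (ge_X (hm i hi))); lra.
Qed.

Lemma SUM_X F : null F -> Xo (SUM F) = SUM (fun i => Xo (F i)).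
Proof.
move=> hF; apply: funext => -[|k]; rewrite /SUM /Xo.
  rewrite add0r (rsum_lin delD lip_del (null_t0 _ hF)).
  by congr rsum; apply: funext => i; rewrite add0r.
rewrite (rsum_lin sigD lip_sig (null_t0 _ hF)).
rewrite (rsum_lin delD lip_del (null_t0 _ hF)) rsumD //.
  exact: (tends0_lin lip_sig (null_t0 _ hF)).
exact: (tends0_lin lip_del (null_t0 _ hF)).
Qed.

Lemma psumS0 F : psumS F 0 = szero R.
Proof. by apply: funext => k; rewrite /psumS /psum big_geq. Qed.

Lemma psumSS F n : psumS F n.+1 = sadd (psumS F n) (F n).
Proof. by apply: funext => k; rewrite /psumS /psum big_nat_recr. Qed.

Lemma SUM_fin F n : (forall i, (n <= i)%N -> F i = szero R) -> SUM F = psumS F n.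
Proof.
move=> h; apply: funext => k; rewrite /SUM /psumS; apply: rsum_fin => i hi.
by rewrite h.
Qed.

Lemma null_shift F : null F -> null (fun i => F i.+1).
Proof. by move=> h N; have [m hm] := h N; exists m => i hi; apply: hm; apply: leqW. Qed.

Lemma SUM_shift F : F 0%N = szero R -> null F -> SUM F = SUM (fun i => F i.+1).
Proof.
move=> h0 hF; apply: funext => k; rewrite /SUM; apply: rsum_shift.
  by rewrite h0.
exact: null_t0.
Qed.

Lemma null_zero : null (fun _ => szero R).
Proof. by move=> N; exists 0%N => i _; apply: ge0. Qed.

Lemma SUM0 : SUM (fun _ => szero R) = szero R.
Proof. by rewrite (@SUM_fin _ 0) // psumS0. Qed.

Lemma sclose X Y : (forall T, exists Z, ge T (ssub X Z) /\ ge T (ssub Y Z)) -> X = Y.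
Proof.
move=> h; apply: funext => k; apply: close_eq => T.
have [Z [h1 h2]] := h (T + hf k)%R; exists (Z k).
by have := h1 k; have := h2 k; rewrite addrK.
Qed.

Definition mulS (f g : ser R) : ser R :=
  SUM (fun i => sscal (f i) (iter i Xo g)).

Lemma term_ge C B a i h : big (C - hf i) a -> ge B h ->
  ge (C + B) (sscal a (iter i Xo h)).
Proof.
move=> ha hh k; have := bigM ha (ge_Xi i hh k).
by move=> hh0; apply: (big_le _ hh0); lra.
Qed.

Lemma null_mul f h B : Rb f -> ge B h -> null (fun i => sscal (f i) (iter i Xo h)).
Proof.
move=> hf hh N; have [n0 hn0] := hf (N - B)%R.
exists n0 => i hi; have := term_ge (hn0 i hi) hh.
by rewrite subrK.
Qed.

Lemma ge_mul A B f h : Rb f -> ge A f -> ge B h -> ge (A + B) (mulS f h).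
Proof.
move=> hf hA hB; apply: SUM_ge; first exact: null_mul hf hB.
move=> i; exact: term_ge (hA i) hB.
Qed.

Lemma Rb_mul f g : Rb f -> Rb g -> Rb (mulS f g).
Proof.
move=> hf hg T.
have [Af hAf] := Rb_ge hf; have [Ag hAg] := Rb_ge hg.
have [n1 hn1] := hf (T - Ag)%R; have [n2 hn2] := hg (T - Af)%R.
exists (n1 + n2)%N => n hn.
apply: (rsum_big (null_t0 n (null_mul hf hAg))) => i; rewrite /sscal; have [hi|hi] := leqP n1 i.
  have := bigM (hn1 i hi) (ge_Xi i hAg n); move=> hh0; apply: (big_le _ hh0); lra.
have hk : (n2 + i <= n)%N.
  by move: hi hn; clear; lia.
have := bigM (hAf i) (tail_Xi hn2 hk); move=> hh0; apply: (big_le _ hh0); lra.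
Qed.

Lemma X_add g h : Xo (sadd g h) = sadd (Xo g) (Xo h).
Proof.
apply: funext => -[|m]; rewrite /Xo /sadd.
  by rewrite !add0r delD.
by rewrite sigD delD addrACA.
Qed.

Lemma Xi_add i g h : iter i Xo (sadd g h) = sadd (iter i Xo g) (iter i Xo h).
Proof. by elim: i => [|i IH] //=; rewrite IH X_add. Qed.

Lemma X_scal a k : Xo (sscal a k) =
  sadd (sscal (sigma a) (Xo k)) (sscal (delta a) k).
Proof.
apply: funext => -[|m]; rewrite /Xo /sadd /sscal.
  by rewrite !add0r delM addrC.
rewrite sigM delM mulrDr -!addrA; congr (_ + _)%R; exact: addrC.
Qed.

Lemma X_smono n b : Xo (smono n b) =
  sadd (smono n.+1 (sigma b)) (smono n (delta b)).
Proof.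
apply: funext => m; rewrite /Xo /sadd /smono.
case: m => [|m].
  by case: n => [|n] /=; rewrite ?add0r ?del0.
rewrite eqSS; case: (eqVneq m n) => [->|hmn].
  by rewrite (gtn_eqF (ltnSn n)) del0 !addr0.
by rewrite sig0; case: eqP => _ /=; rewrite ?del0 !add0r.
Qed.

Lemma smono0 n : smono n (0%R : R) = szero R.
Proof. by apply: funext => m; rewrite /smono /szero; case: ifP. Qed.

Lemma sadd0 (g : ser R) : sadd g (szero R) = g.
Proof. by apply: funext => m; rewrite /sadd /szero addr0. Qed.

Lemma Xi_one i : iter i Xo (smono 0 1%R) = smono i (1%R : R).
Proof.
elim: i => [|i IH] //=; rewrite IH X_smono sig1 del1 smono0 sadd0 //.
Qed.

Lemma sscal0 (g : ser R) : sscal 0%R g = szero R.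
Proof. by apply: funext => m; rewrite /sscal /szero mul0r. Qed.

Lemma mulS_addl f1 f2 h B : Rb f1 -> Rb f2 -> ge B h ->
  mulS (sadd f1 f2) h = sadd (mulS f1 h) (mulS f2 h).
Proof.
move=> h1 h2 hB; rewrite /mulS -SUM_add; try exact: null_mul hB.
by congr SUM; apply: funext => i; apply: funext => k; rewrite /sscal /sadd mulrDl.
Qed.

Lemma mulS_addr f g h Bg Bh : Rb f -> ge Bg g -> ge Bh h ->
  mulS f (sadd g h) = sadd (mulS f g) (mulS f h).
Proof.
move=> hf hg hh; rewrite /mulS -SUM_add; try exact: null_mul.
congr SUM; apply: funext => i; rewrite Xi_add.
by apply: funext => k; rewrite /sscal /sadd mulrDr.
Qed.

Lemma mulS0l h : mulS (szero R) h = szero R.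
Proof.
rewrite /mulS -[RHS]SUM0; congr SUM; apply: funext => i.
exact: sscal0.
Qed.

Lemma mulS_const a f : mulS (sconst a) f = sscal a f.
Proof.
rewrite /mulS (@SUM_fin _ 1) ?psumSS ?psumS0.
  apply: funext => k; rewrite /sadd /szero add0r //.
by move=> [//|i] _; rewrite /sconst /smono /= sscal0.
Qed.

Lemma mulS_mono i a h : mulS (smono i a) h = sscal a (iter i Xo h).
Proof.
rewrite /mulS (@SUM_fin _ i.+1) ?psumSS.
  have -> : psumS (fun j => sscal (smono i a j) (iter j Xo h)) i = szero R.
    apply: funext => k; rewrite /psumS /psum big_nat_cond big1 // => j.
    by rewrite andbT => /andP[_ hj]; rewrite /smono /sscal ifN ?mul0r // ltn_eqF.
  by apply: funext => k; rewrite /sadd /szero add0r /smono eqxx.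
by move=> j hj; rewrite /smono ifN ?sscal0 // gtn_eqF.
Qed.

Lemma sopp_scal (g : ser R) : sopp g = sscal (-1)%R g.
Proof. by apply: funext => k; rewrite /sopp /sscal mulN1r. Qed.

Lemma mulS_oppl g h B : Rb g -> ge B h -> mulS (sopp g) h = sopp (mulS g h).
Proof.
move=> hg hB; rewrite [RHS]sopp_scal /mulS SUM_scal; last exact: null_mul hB.
congr SUM; apply: funext => i; apply: funext => k.
by rewrite /sscal /sopp mulrA mulN1r.
Qed.

Lemma mulS_subl f g h B : Rb f -> Rb g -> ge B h ->
  mulS (ssub f g) h = ssub (mulS f h) (mulS g h).
Proof.
move=> hf hg hB; rewrite -[ssub f g]/(sadd f (sopp g)).
by rewrite (mulS_addl hf (Rb_opp hg) hB) (mulS_oppl hg hB).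
Qed.

Lemma mulS_scal a g h B : Rb g -> ge B h ->
  sscal a (mulS g h) = mulS (sscal a g) h.
Proof.
move=> hg hB; rewrite /mulS SUM_scal; last exact: null_mul hB.
congr SUM; apply: funext => i; apply: funext => k.
by rewrite /sscal mulrA.
Qed.

Lemma mulS_X g h B : Rb g -> ge B h -> Xo (mulS g h) = mulS (Xo g) h.
Proof.
move=> hg hB; rewrite /mulS (SUM_X (null_mul hg hB)).
pose G1 i := sscal (sigma (g i)) (iter i.+1 Xo h).
pose G2 i := sscal (delta (g i)) (iter i Xo h).
pose H1 i := sscal (if i is i'.+1 then sigma (g i') else 0%R) (iter i Xo h).
have nG1 : null G1.
  have -> : G1 = fun i => sscal (sigma (g i)) (iter i Xo (Xo h)).
    by apply: funext => i; rewrite /G1 iterSr.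
  exact: null_mul (Rb_sig hg) (ge_X hB).
have nG2 : null G2 by exact: null_mul (Rb_del hg) hB.
have nH1 : null H1 by exact: null_mul (Rb_shsig hg) hB.
have -> : (fun i => Xo (sscal (g i) (iter i Xo h))) = fun i => sadd (G1 i) (G2 i).
  by apply: funext => i; rewrite X_scal.
have -> : (fun i => sscal (Xo g i) (iter i Xo h)) = fun i => sadd (H1 i) (G2 i).
  apply: funext => i; apply: funext => k.
  by rewrite /sscal /sadd /H1 /G2 /Xo mulrDl.
rewrite !SUM_add // (SUM_shift _ nH1) //.
by rewrite /H1 sscal0.
Qed.

Lemma mulS_Xi i g h B : Rb g -> ge B h ->
  iter i Xo (mulS g h) = mulS (iter i Xo g) h.
Proof.
move=> hg hB; elim: i => [|i IH] //=.
by rewrite IH (mulS_X (Rb_Xi i hg) hB).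
Qed.

Lemma Rb_psumS F n : (forall i, Rb (F i)) -> Rb (psumS F n).
Proof.
move=> h; elim: n => [|n IH]; first by rewrite psumS0; exact: Rb_zero.
by rewrite psumSS; apply: Rb_add.
Qed.

Lemma mulS_psumS F h B n : (forall i, Rb (F i)) -> ge B h ->
  mulS (psumS F n) h = psumS (fun i => mulS (F i) h) n.
Proof.
move=> hF hB; elim: n => [|n IH]; first by rewrite !psumS0 mulS0l.
by rewrite !psumSS (mulS_addl (Rb_psumS n hF) (hF n) hB) IH.
Qed.

Lemma mulS_SUM F h : null F -> (forall i, Rb (F i)) -> Rb (SUM F) -> Rb h ->
  mulS (SUM F) h = SUM (fun i => mulS (F i) h).
Proof.
move=> nF hF hS hh; have [B hB] := Rb_ge hh.
have nM : null (fun i => mulS (F i) h).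
  move=> N; have [m hm] := nF (N - B)%R; exists m => i hi.
  by have := ge_mul (hF i) (hm i hi) hB; rewrite subrK.
apply: sclose => T.
have [m1 hm1] := SUM_tail nM T.
have [m2 hm2] := SUM_tail nF (T - B)%R.
exists (psumS (fun i => mulS (F i) h) (maxn m1 m2)); split; last first.
  by apply: hm1; rewrite leq_maxl.
rewrite -(mulS_psumS _ hF hB) -(mulS_subl hS (Rb_psumS _ hF) hB).
have := ge_mul (Rb_sub hS (Rb_psumS (maxn m1 m2) hF)) (hm2 _ (leq_maxr _ _)) hB.
by rewrite subrK.
Qed.

Lemma mulS_assoc f g h : Rb f -> Rb g -> Rb h ->
  mulS (mulS f g) h = mulS f (mulS g h).
Proof.
move=> hf hg hh; have [Bg hBg] := Rb_ge hg; have [Bh hBh] := Rb_ge hh.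
have -> : mulS f (mulS g h) =
    SUM (fun i => mulS (sscal (f i) (iter i Xo g)) h).
  rewrite {1}/mulS; congr SUM; apply: funext => i.
  by rewrite (mulS_Xi i hg hBh) (mulS_scal _ (Rb_Xi i hg) hBh).
rewrite -mulS_SUM //.
- exact: null_mul hf hBg.
- by move=> i; apply: Rb_scal; apply: Rb_Xi.
exact: Rb_mul.
Qed.

Lemma fu_geP X h : (forall A : rat, A%:E <= X -> ge A h) -> X <= f_u u h.
Proof.
case: X => [r||] hX; last by rewrite leNye.
  by apply: ge_fu; apply: hX; rewrite lee_fin.
have -> : h = szero R by apply: ge_inf => A; apply: hX; rewrite leey.
apply: inf_ge => _ [i _ <-]; by rewrite /szero u0.
Qed.

Lemma fu_zero : f_u u (szero R) = +oo.
Proof.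
apply/eqP; rewrite eq_le leey /=; apply: fu_geP => A _; exact: ge0.
Qed.

Lemma fu_val f : Rb f -> f_u u f = +oo \/
  exists i, f_u u f = u (f i) + (hf i)%:E /\ f i != 0%R.
Proof.
move=> hRb.
case: (pselect (exists i, f i != 0%R)) => [[i1 hi1]|hno]; last first.
  left; have -> : f = szero R.
    apply: funext => k; apply/eqP; apply: contraT => hk.
    by exfalso; apply: hno; exists k.
  exact: fu_zero.
right.
case: (u_int (f i1)) => [h1|[z hz]].
  by move: hi1; rewrite (proj1 (u_sep _) h1) eqxx.
have [n0 hn0] := hRb (z%:~R + hf i1 + 1)%R.
pose n := maxn n0 i1.+1.
pose v k := u (f k) + (hf k)%:E.
have [i0 [hi0 hmin]] : exists i0, (i0 < n)%N /\ forall k, (k < n)%N -> v i0 <= v k.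
  have : (0 < n)%N by rewrite /n leq_max orbT.
  elim: n => [//|n IH] _.
  case: (posnP n) => [->|hn].
    by exists 0%N; split => // k; rewrite ltnS leqn0 => /eqP ->.
  have [j [hj hjm]] := IH hn.
  case: (leP (v j) (v n)) => hvj.
    exists j; split; first exact: ltnW.
    by move=> k; rewrite ltnS leq_eqVlt => /orP[/eqP ->|]; last exact: hjm.
  exists n; split => // k; rewrite ltnS leq_eqVlt => /orP[/eqP ->|hk] //.
  by apply: le_trans (hjm _ hk); apply: ltW.
have hv1 : v i0 <= v i1 by apply: hmin; rewrite /n leq_max ltnSn orbT.
exists i0; split.
  apply: inf_min; first by exists i0.
  move=> _ [k _ <-]; have [hk|hk] := ltnP k n; first exact: hmin.
  apply: (le_trans hv1); rewrite /v hz.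
  have hk0 : (n0 <= k)%N by apply: leq_trans hk; rewrite leq_maxl.
  apply: le_trans (_ : ((z%:~R + hf i1 + 1)%R)%:E <= _).
    by rewrite -EFinD lee_fin lerDl.
  by rewrite conv_le; apply: hn0.
apply/negP => /eqP h0; move: hv1; rewrite /v h0 u0 hz.
by rewrite -EFinD /= leNgt ltey.
Qed.

Lemma fu_fin f : Rb f -> f_u u f = +oo \/ exists r : rat, f_u u f = r%:E.
Proof.
move=> hRb; case: (fu_val hRb) => [->|[i [-> hi]]]; first by left.
case: (u_int (f i)) => [h|[z ->]].
  by move: hi; rewrite (proj1 (u_sep _) h) eqxx.
by right; exists (z%:~R + hf i)%R.
Qed.

Lemma fu_half f : Rb f -> f_u u f = +oo \/
  exists z : int, f_u u f = ((z%:~R : rat) / 2%:R)%:E.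
Proof.
move=> hRb; case: (fu_val hRb) => [->|[i [-> hi]]]; first by left.
case: (u_int (f i)) => [h|[z ->]].
  by move: hi; rewrite (proj1 (u_sep _) h) eqxx.
right; exists (2 * z + i%:Z)%R; rewrite -EFinD; congr (_%:E).
by rewrite /hf rmorphD rmorphM /=; field.
Qed.

Lemma fu_split A f g : Rb f -> Rb g -> A%:E <= f_u u f + f_u u g ->
  exists a, a%:E <= f_u u f /\ (A - a)%:E <= f_u u g.
Proof.
move=> hRf hRg hA.
case: (fu_fin hRf) => [ef|[r er]]; case: (fu_fin hRg) => [eg|[s es]].
- by exists A; rewrite ef eg !leey.
- by exists (A - s)%R; rewrite ef es leey opprB addrC subrK lexx.
- by exists r; rewrite er eg leey lexx.
exists r; rewrite er es lexx; split => //.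
by move: hA; rewrite er es -EFinD !lee_fin lerBlDl.
Qed.

Lemma fu_const a : f_u u (sconst a) = u a.
Proof.
apply: inf_min.
  by exists 0%N => //; rewrite -[(_ / _)%R]/(hf 0) hf0 adde0.
move=> _ [[|i] _ <-]; rewrite /sconst /smono /=.
  by rewrite -[(_ / _)%R]/(hf 0) hf0 adde0.
by rewrite u0 leey.
Qed.

Lemma conv_lt (N c : rat) (y : \bar rat) :
  (N%:E < y + c%:E) = ((N - c)%:E < y).
Proof.
case: y => [r||] //=.
  by rewrite -EFinD !lte_fin; apply/idP/idP => h; lra.
by rewrite !ltey.
Qed.

Lemma half_gap (m z : int) (i : nat) :
  ((m%:~R / 2%:R - i%:R / 2%:R : rat) < z%:~R)%R ->
  ((m%:~R / 2%:R + 1 / 2%:R - i%:R / 2%:R : rat) <= z%:~R)%R.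
Proof.
move=> h.
have h2 : ((m - i%:Z)%:~R < (z + z)%:~R :> rat)%R.
  rewrite rmorphB rmorphD /= -[((i%:Z)%:~R : rat)]/(i%:R); lra.
rewrite ltr_int in h2.
have h3 : (m - i%:Z + 1 <= z + z)%R by lia.
have : ((m - i%:Z + 1)%:~R <= (z + z)%:~R :> rat)%R by rewrite ler_int.
rewrite ?rmorphD ?rmorphN ?rmorphB /= -[((i%:Z)%:~R : rat)]/(i%:R) => h4; lra.
Qed.

Lemma gr_iso_mulS : gr_iso u mulS.
Proof.
move=> m lam; split; [|split].
- move=> n r hr; apply: ge_fu => k; rewrite /strunc; case: ifP => hk.
    exact: hr.
  exact: big0.
- move=> n r hr; split.
    move=> hl i hi; have := lt_le_trans hl (fu_le (strunc n r) i).
    by rewrite /strunc hi conv_lt.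
  move=> hs; apply: (@lt_le_trans _ _ (lam + 1 / 2%:R)%R%:E).
    by rewrite lte_fin; lra.
  apply: ge_fu => k; rewrite /strunc; case: ifP => hk; last exact: big0.
  have := hs k hk; rewrite /big; case: (u_int (r k)) => [->|[z ->]].
    by rewrite leey.
  by rewrite !lte_fin lee_fin; apply: half_gap.
move=> f hf hl; move/Rb_iff: hf => hf.
have [n0 hn0] := hf (lam + 1 / 2%:R)%R.
exists n0, f; split.
  by move=> i _; apply: (fu_ge hl i).
apply: (@lt_le_trans _ _ (lam + 1 / 2%:R)%R%:E).
  by rewrite lte_fin; lra.
apply: ge_fu => k; rewrite /ssub /strunc; case: ifPn => hk.
  by rewrite subrr; apply: big0.
by rewrite subr0; apply: hn0; rewrite leqNgt.
Qed.

Lemma sig_iter_big N y n : big N y -> big N (iter n sigma y).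
Proof. by move=> h; elim: n => [|n IH] //=; apply: big_sig. Qed.

Lemma sig_iter_diff N y n : big N y -> big (N + 1) (iter n sigma y - y)%R.
Proof.
move=> h; elim: n => [|n IH] /=; first by rewrite subrr; apply: big0.
have -> : (sigma (iter n sigma y) - y =
    (sigma (iter n sigma y) - iter n sigma y) + (iter n sigma y - y))%R.
  by rewrite addrA subrK.
by apply: bigD => //; apply: big_sig1; apply: sig_iter_big.
Qed.

Lemma X_mono_decomp nu (b : R) j i : big nu b -> exists E,
  iter i Xo (smono j b) = sadd (smono (i + j) (iter i sigma b)) E /\
  ge (nu + hf (i + j) + 1 / 2%:R) E.
Proof.
move=> hb; elim: i => [|i [E [hE gE]]].
  by exists (szero R); rewrite sadd0; split => //; apply: ge0.
exists (sadd (smono (i + j) (delta (iter i sigma b))) (Xo E)); split.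
  rewrite /= hE X_add X_smono addSn.
  by apply: funext => k; rewrite /sadd [RHS]addrA.
apply: geD.
  move=> k; rewrite /smono; case: eqP => [->|_]; last exact: big0.
  apply: (big_le _ (big_del (sig_iter_big i hb))).
  by rewrite addSn hfS; lra.
by apply: (ge_le _ (ge_X gE)); rewrite addSn hfS; lra.
Qed.

Lemma gr_mult_mulS : gr_mult u mulS.
Proof.
move=> mu nu a b i j ha hb.
have [E [hE gE]] := X_mono_decomp j i hb.
rewrite mulS_mono hE.
apply: (@lt_le_trans _ _ ((mu + nu)%:~R + hf (i + j) + 1 / 2%:R)%R%:E).
  by rewrite lte_fin /hf; lra.
apply: ge_fu => k; rewrite /ssub /sscal /sadd /smono.
case: eqP => [->|_].
  have -> : (a * (iter i sigma b + E (i + j)%N) - a * b =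
      a * (iter i sigma b - b) + a * E (i + j)%N)%R.
    by rewrite mulrDr mulrBr addrAC.
  apply: bigD.
    apply: (big_le _ (bigM ha (sig_iter_diff i hb))).
    by rewrite rmorphD /=; lra.
  apply: (big_le _ (bigM ha (gE (i + j)%N))).
  by rewrite rmorphD /=; lra.
rewrite add0r subr0.
apply: (big_le _ (bigM ha (gE k))).
by rewrite rmorphD /=; lra.
Qed.

Lemma ssubK (g h : ser R) : sadd (ssub g h) h = g.
Proof. by apply: funext => k; rewrite /sadd /ssub subrK. Qed.

Lemma mulS_cont f g : Rb f -> Rb g -> forall N, exists M, forall f' g',
  Rb f' -> Rb g' -> ge M (ssub f' f) -> ge M (ssub g' g) ->
  ge N (ssub (mulS f' g') (mulS f g)).
Proof.
move=> hf hg N; have [Af hAf] := Rb_ge hf; have [Ag hAg] := Rb_ge hg.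
pose M := (Num.max (Num.max (N - Af) (N - Ag)) Ag)%R.
have h1 : (N - Af <= M)%R by rewrite /M !le_max lexx.
have h2 : (N - Ag <= M)%R by rewrite /M !le_max lexx orbT.
have h3 : (Ag <= M)%R by rewrite /M le_max lexx orbT.
exists M => f' g' hf' hg' hM1 hM2.
have gg' : ge Ag g'.
  by rewrite -(ssubK g' g); apply: geD => //; apply: ge_le hM2.
have hB : mulS f g' = sadd (mulS f (ssub g' g)) (mulS f g).
  by rewrite -{1}(ssubK g' g) (mulS_addr hf hM2 hAg).
have -> : ssub (mulS f' g') (mulS f g) =
    sadd (mulS (ssub f' f) g') (mulS f (ssub g' g)).
  rewrite (mulS_subl hf' hf gg') hB; apply: funext => k.
  by rewrite /ssub /sadd opprD addrA addrAC subrK.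
apply: geD.
  apply: (ge_le _ (ge_mul (Rb_sub hf' hf) hM1 gg')); lra.
apply: (ge_le _ (ge_mul hf hAf hM2)); lra.
Qed.

Lemma Rb_complete : complete_on (in_Rb u) (@ssub R) (f_u u).
Proof.
move=> s hs hc.
have hs' : forall n, Rb (s n) by move=> n; apply/Rb_iff.
have lim : forall k, exists l, conv (fun i => s i k) l.
  move=> k.
  have hcs : cauchy_seq (fun a b => (a - b)%R) u (fun i => s i k).
    move=> N; have [m hm] := hc (N + hf k)%R; exists m => i j hi hj.
    by have := fu_ge (hm i j hi hj) k; rewrite addrK.
  have [l [_ hl]] := u_comp (fun _ => I) hcs.
  by exists l.
pose a k := projT1 (cid (lim k)).
have ha : forall k, conv (fun i => s i k) (a k) by move=> k; exact: projT2 (cid (lim k)).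
have conv_a : forall N, exists m, forall i, (m <= i)%N -> ge N (ssub (s i) a).
  move=> N; have [m hm] := hc N; exists m => i hi k.
  have [mk hmk] := ha k (N - hf k)%R; rewrite /ssub.
  have -> : (s i k - a k = (s i k - s (maxn m mk) k) + (s (maxn m mk) k - a k))%R.
    by rewrite addrA subrK.
  apply: bigD.
    by apply: (fu_ge (hm _ _ hi (leq_maxl _ _))).
  by apply: hmk; rewrite leq_maxr.
exists a; split; last first.
  by move=> N; have [m hm] := conv_a N; exists m => i hi; apply: ge_fu; apply: hm.
apply/Rb_iff => N; have [K hK] := bigN_gen.
have [m hm] := conv_a (N - K)%R; have [n0 hn0] := hs' m N.
exists n0 => n hn.
have -> : a n = (s m n + - (s m n - a n))%R by rewrite opprB addrC subrK.
apply: bigD; first exact: hn0.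
by apply: hK; have := hm m (leqnn m) n; rewrite addrAC.
Qed.

Lemma sscal_mono (b : R) n : sscal b (smono n 1%R) = smono n b.
Proof.
by apply: funext => k; rewrite /sscal /smono; case: ifP; rewrite ?mulr1 ?mulr0.
Qed.

Lemma strunc0 (r : nat -> R) : strunc 0 r = smono 0 0%R.
Proof. by apply: funext => k; rewrite /strunc /smono; case: ifP. Qed.

Lemma struncS n (r : nat -> R) : strunc n.+1 r = sadd (strunc n r) (smono n (r n)).
Proof.
apply: funext => k; rewrite /strunc /sadd /smono ltnS leq_eqVlt.
case: (eqVneq k n) => [->|hkn] /=; first by rewrite ltnn add0r.
by case: ifP; rewrite addr0.
Qed.

Lemma tail_small h : Rb h -> forall T, exists n0, forall n, (n0 <= n)%N ->
  ge T (ssub (strunc n h) h).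
Proof.
move=> hh T; have [n0 hn0] := Rb_opp hh T; exists n0 => n hn k.
rewrite /ssub /strunc; case: ifPn => hk; first by rewrite subrr; apply: big0.
rewrite sub0r; apply: hn0; apply: leq_trans hn _; by rewrite leqNgt.
Qed.

Lemma Xo_opp g : Xo (sopp g) = sopp (Xo g).
Proof.
have s1 : sigma (-1)%R = (-1)%R by rewrite (add_fN sigD) sig1.
have d1 : delta (-1)%R = 0%R by rewrite (add_fN delD) del1 oppr0.
rewrite !sopp_scal X_scal s1 d1 sscal0 sadd0 //.
Qed.

Lemma Xo_sub g h : Xo (ssub g h) = ssub (Xo g) (Xo h).
Proof. by rewrite -[ssub g h]/(sadd g (sopp h)) X_add Xo_opp. Qed.

Lemma sclose2 X Y : (forall T, exists Z, ge T (ssub Z X) /\ ge T (ssub Z Y)) -> X = Y.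
Proof.
move=> h; apply: funext => k; apply: close_eq2 => T.
have [Z [h1 h2]] := h (T + hf k)%R; exists (Z k).
by have := h1 k; have := h2 k; rewrite addrK.
Qed.

Lemma ge_opp : exists K, forall N g, ge N g -> ge (N + K) (sopp g).
Proof.
have [K hK] := lipN; exists K => N g hg k.
by have := hK _ _ (hg k); rewrite addrAC.
Qed.

Lemma ssubxx (g : ser R) : ssub g g = szero R.
Proof. by apply: funext => k; rewrite /ssub subrr. Qed.

Lemma mul_unique mul' : skew_mult u sigma delta mul' ->
  forall f g, in_Rb u f -> in_Rb u g -> mul' f g = mulS f g.
Proof.
case=> cl [ass [dl [dr [lc [xa [xn cont]]]]]].
have R_ : forall g, Rb g -> in_Rb u g by move=> g /Rb_iff.
have hmono : forall n b, in_Rb u (smono n b) by move=> n b; apply: R_; apply: Rb_smono.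
have hA : forall n b, mul' (sX R) (smono n b) = Xo (smono n b).
  move=> n b.
  have e1 : smono n b = mul' (sconst b) (smono n 1%R) by rewrite lc ?sscal_mono.
  have e2 : smono 1 (sigma b) = mul' (sconst (sigma b)) (sX R).
    by rewrite lc ?sscal_mono //; apply: hmono.
  rewrite {1}e1 -ass ?xa ?dr //; try apply: hmono.
  by rewrite e2 ass ?xn ?lc ?sscal_mono ?X_smono //; try apply: hmono.
have hA' : forall n r, mul' (sX R) (strunc n r) = Xo (strunc n r).
  move=> n r; elim: n => [|n IH]; first by rewrite strunc0 hA.
  rewrite struncS dl ?IH ?hA ?X_add //; try apply: hmono.
  by apply: R_; apply: Rb_strunc.
have hB : forall h, Rb h -> mul' (sX R) h = Xo h.
  move=> h hh; apply: sclose2 => T.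
  have [M hM] := cont _ _ (hmono 1%N 1%R) (R_ _ hh) T.
  have [n0 hn0] := tail_small hh (Num.max M T).
  exists (Xo (strunc n0 h)); split.
    rewrite -hA'; apply: fu_ge; apply: hM.
    - exact: hmono.
    - by apply: R_; apply: Rb_strunc.
    - by rewrite ssubxx fu_zero leey.
    apply: ge_fu; apply: (ge_le _ (hn0 n0 (leqnn n0))); by rewrite le_max lexx.
  rewrite -Xo_sub; apply: (ge_le _ (ge_X (hn0 n0 (leqnn n0)))).
  have : (T <= Num.max M T)%R by rewrite le_max lexx orbT.
  move=> hT; lra.
have hC1 : forall i h, Rb h -> mul' (smono i 1%R) h = iter i Xo h.
  move=> i h hh; elim: i => [|i IH].
    rewrite lc; last exact: R_.
    by apply: funext => k; rewrite /sscal mul1r.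
  rewrite -xn ass ?IH ?hB //; try apply: hmono; try by apply: R_.
  exact: Rb_Xi.
have hC : forall i a h, Rb h -> mul' (smono i a) h = sscal a (iter i Xo h).
  move=> i a h hh.
  have e : smono i a = mul' (sconst a) (smono i 1%R) by rewrite lc ?sscal_mono.
  rewrite e ass ?hC1 ?lc //; try apply: hmono; try by apply: R_.
  by apply: R_; apply: Rb_Xi.
have hD : forall n f g, Rb g ->
    mul' (strunc n f) g = psumS (fun i => sscal (f i) (iter i Xo g)) n.
  move=> n f g hg; elim: n => [|n IH].
    by rewrite strunc0 hC // psumS0 sscal0.
  rewrite struncS dr ?IH ?hC ?psumSS //; try apply: hmono; try by apply: R_.
  by apply: R_; apply: Rb_strunc.
move=> f g /Rb_iff hf /Rb_iff hg; apply: sclose2 => T.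
have [K hK] := ge_opp.
have [Bg hBg] := Rb_ge hg.
have [M hM] := cont _ _ (R_ _ hf) (R_ _ hg) T.
have [m1 hm1] := tail_small hf M.
have [m2 hm2] := SUM_tail (null_mul hf hBg) (T - K)%R.
exists (mul' (strunc (maxn m1 m2) f) g); split.
  apply: fu_ge; apply: hM; try by apply: R_; apply: Rb_strunc.
  - exact: R_.
  - by apply: ge_fu; apply: hm1; rewrite leq_maxl.
  by rewrite ssubxx fu_zero leey.
rewrite hD //.
have -> : ssub (psumS (fun i => sscal (f i) (iter i Xo g)) (maxn m1 m2)) (mulS f g)
    = sopp (ssub (mulS f g) (psumS (fun i => sscal (f i) (iter i Xo g)) (maxn m1 m2))).
  by apply: funext => k; rewrite /sopp /ssub opprB.
have := hK _ _ (hm2 (maxn m1 m2) (leq_maxr _ _)); rewrite subrK; exact.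
Qed.

Lemma sscal1 (g : ser R) : sscal 1%R g = g.
Proof. by apply: funext => k; rewrite /sscal mul1r. Qed.

Lemma skew_mulS : skew_mult u sigma delta mulS.
Proof.
split; [|split; [|split; [|split; [|split; [|split; [|split]]]]]].
- by move=> f g /Rb_iff hf /Rb_iff hg; apply/Rb_iff; exact: Rb_mul.
- by move=> f g h /Rb_iff hf /Rb_iff hg /Rb_iff hh; exact: mulS_assoc.
- move=> f g h /Rb_iff hf /Rb_iff hg /Rb_iff hh.
  have [Bg hBg] := Rb_ge hg; have [Bh hBh] := Rb_ge hh.
  exact: mulS_addr hf hBg hBh.
- move=> f g h /Rb_iff hf /Rb_iff hg /Rb_iff hh.
  have [B hB] := Rb_ge hh; exact: mulS_addl hf hg hB.
- by move=> a f _; exact: mulS_const.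
- by move=> a; rewrite /sX mulS_mono sscal1 /= X_smono.
- by move=> n; rewrite /sX mulS_mono sscal1 /= X_smono sig1 del1 smono0 sadd0.
move=> f g /Rb_iff hf /Rb_iff hg N; have [M hM] := mulS_cont hf hg N.
exists M => f' g' /Rb_iff hf' /Rb_iff hg' h1 h2.
by apply: ge_fu; apply: hM => //; apply: fu_ge.
Qed.

Lemma mulS_one_r f : mulS f (sone R) = f.
Proof.
apply: funext => k; rewrite /mulS /SUM.
have -> : (fun i => sscal (f i) (iter i Xo (sone R)) k) =
    (fun i => f i * (if k == i then 1 else 0))%R.
  by apply: funext => i; rewrite /sone /sconst Xi_one.
rewrite (@rsum_fin _ k.+1); last first.
  by move=> i hi; rewrite ifF ?mulr0 // ltn_eqF.
rewrite /psum big_nat_recr //= eqxx mulr1 big_nat_cond big1 ?add0r //.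
by move=> i /andP[/andP[_ hi] _]; rewrite gtn_eqF // mulr0.
Qed.

Lemma main_sec : exists mul : ser R -> ser R -> ser R,
    [/\ in_Rb u (szero R),
        (forall f g, in_Rb u f -> in_Rb u g -> in_Rb u (sadd f g)),
        (forall f, in_Rb u f -> in_Rb u (sopp f)),
        (forall a f, in_Rb u f -> in_Rb u (sscal a f)) &
      [/\ skew_mult u sigma delta mul,
          in_Rb u (sone R),
          (forall f, in_Rb u f -> mul (sone R) f = f),
          (forall f, in_Rb u f -> mul f (sone R) = f) &
          (forall mul', skew_mult u sigma delta mul' ->
             forall f g, in_Rb u f -> in_Rb u g -> mul' f g = mul f g)]] /\
    [/\ halfint_valued (in_Rb u) (f_u u),
        is_filtration_on (in_Rb u) (szero R) (@sadd R) mul (f_u u),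
        (forall a, f_u u (sconst a) = u a),
        complete_on (in_Rb u) (@ssub R) (f_u u) &
        gr_iso u mul /\ gr_mult u mul].
Proof.
exists mulS; split; split.
- by apply/Rb_iff; exact: Rb_zero.
- by move=> f g /Rb_iff hf /Rb_iff hg; apply/Rb_iff; exact: Rb_add.
- by move=> f /Rb_iff hf; apply/Rb_iff; exact: Rb_opp.
- by move=> a f /Rb_iff hf; apply/Rb_iff; exact: Rb_scal.
- split.
  + exact: skew_mulS.
  + by apply/Rb_iff; exact: Rb_smono.
  + by move=> f _; rewrite /sone mulS_const sscal1.
  + by move=> f _; exact: mulS_one_r.
  by move=> mul' hm f g hf hg; apply: mul_unique.
- by move=> f /Rb_iff hf; exact: fu_half.
- split; first exact: fu_zero.
  split.
    move=> f g _ _; apply: fu_geP => A hA; apply: geD; apply: fu_ge.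
      by apply: le_trans hA _; rewrite ge_min lexx.
    by apply: le_trans hA _; rewrite ge_min lexx orbT.
  move=> f g /Rb_iff hf /Rb_iff hg; apply: fu_geP => A hA.
  have [a [ha1 ha2]] := fu_split hf hg hA.
  have := ge_mul hf (fu_ge ha1) (fu_ge ha2).
  by rewrite addrC subrK.
- exact: fu_const.
- exact: Rb_complete.
split; [exact: gr_iso_mulS | exact: gr_mult_mulS].
Qed.

End Main.

Unset Implicit Arguments.

Theorem proposition1p4p1 (R : pzRingType) (u : R -> \bar rat)
  (sigma delta : R -> R) :
  int_valued u -> filtration u -> separated_filt u ->
  complete_on (fun _ => True) (fun a b => (a - b)%R) u ->
  skew_derivation sigma delta -> compatible u sigma delta ->
  exists mul : ser R -> ser R -> ser R,
    (* (i) R^b is a left R-submodule, and a ring under a multiplication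
       extending x a = σ(a) x + δ(a) continuously and R-linearly ... *)
    [/\ in_Rb u (szero R),
        (forall f g, in_Rb u f -> in_Rb u g -> in_Rb u (sadd f g)),
        (forall f, in_Rb u f -> in_Rb u (sopp f)),
        (forall a f, in_Rb u f -> in_Rb u (sscal a f)) &
      [/\ skew_mult u sigma delta mul,
          in_Rb u (sone R),
          (forall f, in_Rb u f -> mul (sone R) f = f),
          (forall f, in_Rb u f -> mul f (sone R) = f) &
          (* ... in a unique way *)
          (forall mul', skew_mult u sigma delta mul' ->
             forall f g, in_Rb u f -> in_Rb u g -> mul' f g = mul f g)]] /\
    (* (ii) *)
    [/\ halfint_valued (in_Rb u) (f_u u),
        is_filtration_on (in_Rb u) (szero R) (@sadd R) mul (f_u u),
        (forall a, f_u u (sconst a) = u a),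
        complete_on (in_Rb u) (@ssub R) (f_u u) &
        gr_iso u mul /\ gr_mult u mul].
Proof.
move=> h1 h2 h3 h4 h5 h6.
exact: (main_sec h1 h2 h3 h4 h5 h6).
Qed.
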